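(* Let $s>0$, $r>0$, $L_\infty>0$, $L_0>0$, and let $\alpha,\beta$ satisfy $0<\alpha\le 1$, $0<\beta\le1$, with $n:=\alpha+\beta$. Assume $n\neq 1$ and $\alpha\neq 1$. Set $L_*:=L_\infty-L_0$. Let $k$ be a positive solution, defined on an interval containing $0$, of the Cauchy problem $$\dot k = s\left(L_\infty-L_*e^{-rt}\right)^{n-1}k^{\alpha}-rL_*e^{-rt}k,\qquad k(0)=k_0.$$ Then for all $t\ge 0$ in that interval $$k(t)=\left( e^{-(\alpha-1)L_*e^{-rt}}\left(k_0^{1-\alpha}e^{(\alpha-1)L_*}-(\alpha-1)\int_0^t\mathcal L(\tau)\,d\tau\right)\right)^{\frac{1}{1-\alpha}},$$ where $$\mathcal L(\tau):=\frac{s\left(L_\infty-L_*e^{-r\tau}\right)^{n}\exp\!\left[r\tau+(\alpha-1)L_*e^{-r\tau}\right]}{L_\infty\left(e^{r\tau}-1\right)+L_0}.$$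
   Context: $\dot{}$ denotes the derivative with respect to time $t$. The function $L(t)=L_\infty-L_*e^{-rt}$ (von Bertalanffy labor force) is positive for $t\ge 0$ under the given assumptions, and the equation comes from a Solow-Swan type model with Cobb-Douglas production $F(K,L)=K^\alpha L^\beta$. *)

(* Defs.v *)
From Stdlib Require Import Reals.
From Coquelicot Require Import Coquelicot.
Open Scope R_scope.

Definition is_interval (I : R -> Prop) : Prop :=
  forall a b x, I a -> I b -> a <= x <= b -> I x.

(* [f] has derivative [df] at [t] relative to the interval [I]
   (two-sided at interior points, one-sided at endpoints belonging to I). *)
Definition has_derivative_within (I : R -> Prop) (f : R -> R) (t df : R) : Prop :=
  filterlim (fun h => (f (t + h) - f t) / h)
    (within (fun h => h <> 0 /\ I (t + h)) (locally 0)) (locally df).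

Definition labor (Linf L0 r t : R) : R := Linf - (Linf - L0) * exp (- r * t).

Definition calL (s r Linf L0 alpha beta tau : R) : R :=
  s * Rpower (labor Linf L0 r tau) (alpha + beta)
    * exp (r * tau + (alpha - 1) * (Linf - L0) * exp (- r * tau))
  / (Linf * (exp (r * tau) - 1) + L0).

(* Main.v *)
Require Import Defs.
From Stdlib Require Import Reals Lra.
From Coquelicot Require Import Coquelicot.
Open Scope R_scope.

Lemma deriv_eps (I : R -> Prop) f x df : has_derivative_within I f x df ->
  forall eps, 0 < eps -> exists d, 0 < d /\ forall h, h <> 0 -> I (x+h) -> Rabs h < d ->
   Rabs ((f (x+h) - f x)/h - df) < eps.
Proof.
  intros H eps He.
  apply (proj1 (filterlim_locally _ _)) with (eps := mkposreal eps He) in H.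
  destruct H as [d Hd]. exists d. split. apply cond_pos.
  intros h h0 Ih Hh. apply (Hd h).
  - unfold ball; simpl; unfold AbsRing_ball, abs, minus, plus, opp; simpl. rewrite Ropp_0, Rplus_0_r. exact Hh.
  - split; assumption.
Qed.

Lemma cont_within (I : R -> Prop) f x df : has_derivative_within I f x df ->
  filterlim f (within I (locally x)) (locally (f x)).
Proof.
  intros H. apply filterlim_locally. intros eps.
  destruct (deriv_eps I f x df H 1 Rlt_0_1) as [d [Hd Hq]].
  assert (Hp : 0 < Rmin d (eps / (Rabs df + 1))).
  { apply Rmin_pos; auto. apply Rdiv_lt_0_compat. apply cond_pos. pose proof (Rabs_pos df); lra. }
  exists (mkposreal _ Hp). intros y Hy Iy. change R in y.
  unfold ball in Hy |- *; simpl in Hy |- *; unfold AbsRing_ball, abs, minus, plus, opp in Hy |- *; simpl in Hy |- *.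
  destruct (Req_dec y x) as [->|Hne].
  - change (Rabs (f x + - f x) < eps). rewrite Rplus_opp_r, Rabs_R0. apply cond_pos.
  - set (h := y - x) in *.
    assert (h0 : h <> 0) by (unfold h; lra).
    assert (Hy' : y = x + h) by (unfold h; ring).
    rewrite Hy' in Iy |- *.
    assert (Hh1 : Rabs h < d) by (eapply Rlt_le_trans; [exact Hy| apply Rmin_l]).
    assert (Hh2 : Rabs h < eps / (Rabs df + 1)) by (eapply Rlt_le_trans; [exact Hy| apply Rmin_r]).
    specialize (Hq h h0 Iy Hh1).
    assert (E : f (x+h) + - f x = h * ((f (x+h) - f x)/h)) by (field; auto).
    rewrite E, Rabs_mult.
    assert (Rabs ((f (x + h) - f x) / h) < Rabs df + 1).
    { pose proof (Rabs_triang_inv ((f (x + h) - f x) / h) df). lra. }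
    pose proof (Rabs_pos h). pose proof (Rabs_pos df).
    apply Rlt_le_trans with (Rabs h * (Rabs df + 1)).
    + destruct (Req_dec (Rabs h) 0) as [E0|E0].
      * exfalso. apply h0. apply Rabs_eq_0; auto.
      * apply Rmult_lt_compat_l; lra.
    + apply Rlt_le in Hh2. 
      apply (Rmult_le_compat_r (Rabs df + 1)) in Hh2; [|lra].
      replace (eps / (Rabs df + 1) * (Rabs df + 1)) with (pos eps) in Hh2 by (field; lra). exact Hh2.
Qed.

Lemma deriv_interior (I : R -> Prop) f x df e : has_derivative_within I f x df -> 0 < e ->
  (forall y, Rabs (y - x) < e -> I y) -> is_derive f x df.
Proof.
  intros H He HI. apply is_derive_Reals. intros eps Heps.
  destruct (deriv_eps I f x df H eps Heps) as [d [Hd Hq]].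
  assert (Hp : 0 < Rmin d e) by (apply Rmin_pos; auto).
  exists (mkposreal _ Hp). intros h h0 Hh. simpl in Hh.
  apply Hq; auto.
  - apply HI. replace (x + h - x) with h by ring. eapply Rlt_le_trans; [exact Hh|apply Rmin_r].
  - eapply Rlt_le_trans; [exact Hh|apply Rmin_l].
Qed.

Lemma lim_mult {T} (F : (T -> Prop) -> Prop) {FF : Filter F} f g lf lg :
  filterlim f F (locally lf) -> filterlim g F (locally lg) ->
  filterlim (fun y => f y * g y) F (locally (lf * lg)).
Proof.
  intros Hf Hg. apply (filterlim_comp_2 f g Rmult Hf Hg).
  apply (filterlim_mult (K:=R_AbsRing) lf lg).
Qed.

Lemma lim_plus {T} (F : (T -> Prop) -> Prop) {FF : Filter F} f g lf lg :
  filterlim f F (locally lf) -> filterlim g F (locally lg) ->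
  filterlim (fun y => f y + g y) F (locally (lf + lg)).
Proof.
  intros Hf Hg. apply (filterlim_comp_2 f g Rplus Hf Hg).
  apply (filterlim_plus (V:=R_NormedModule) lf lg).
Qed.

Lemma endpoint (I : R -> Prop) (G : R -> R) p c :
  filterlim G (within I (locally p)) (locally (G p)) ->
  (forall d, 0 < d -> exists y, I y /\ Rabs (y - p) < d /\ G y = c) -> G p = c.
Proof.
  intros H Hy. destruct (Req_dec (G p) c) as [E|E]; auto. exfalso.
  assert (He : 0 < Rabs (G p - c)) by (apply Rabs_pos_lt; lra).
  apply (proj1 (filterlim_locally _ _)) with (eps := mkposreal _ He) in H.
  destruct H as [d Hd]. destruct (Hy d (cond_pos d)) as [y [Iy [Hyd Gy]]].
  specialize (Hd y Hyd Iy). unfold ball in Hd; simpl in Hd; unfold AbsRing_ball, abs, minus, plus, opp in Hd; simpl in Hd.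
  rewrite Gy in Hd. rewrite <- Rabs_Ropp in Hd. replace (- (c + - G p)) with (G p - c) in Hd by ring. lra.
Qed.

Lemma lab_pos Linf L0 r z : 0 < Linf -> 0 < L0 -> 0 < r -> 0 <= z -> 0 < labor Linf L0 r z.
Proof.
  intros. unfold labor.
  assert (0 < exp (- r * z)) by apply exp_pos.
  assert (exp (- r * z) <= 1).
  { rewrite <- exp_0. destruct (Req_dec z 0) as [->|Hz].
    - replace (- r * 0) with 0 by ring. lra.
    - left. apply exp_increasing. nra. }
  destruct (Rle_dec 0 (Linf - L0)); nra.
Qed.

Lemma lab_pos2 Linf L0 r : 0 < Linf -> 0 < L0 -> 0 < r ->
  exists d, 0 < d /\ forall z, - d < z -> 0 < labor Linf L0 r z.
Proof.
  intros HL HL0 Hr.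
  assert (Hc : continuous (labor Linf L0 r) 0).
  { apply (ex_derive_continuous (K:=R_AbsRing) (V:=R_NormedModule)). unfold labor. auto_derive. auto. }
  pose proof (proj1 (filterlim_locally (F:=locally 0) (labor Linf L0 r) (labor Linf L0 r 0)) Hc (mkposreal _ HL0)) as Hc'.
  destruct Hc' as [d Hd]. exists d. split. apply cond_pos.
  intros z Hz. destruct (Rle_dec 0 z). apply lab_pos; auto.
  assert (Hb : ball 0 d z).
  { unfold ball; simpl; unfold AbsRing_ball, abs, minus, plus, opp; simpl. rewrite Ropp_0, Rplus_0_r.
    rewrite Rabs_left; lra. }
  specialize (Hd z Hb). unfold ball in Hd; simpl in Hd; unfold AbsRing_ball, abs, minus, plus, opp in Hd; simpl in Hd.
  unfold labor at 2 in Hd. replace (- r * 0) with 0 in Hd by ring. rewrite exp_0 in Hd.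
  replace (Linf - (Linf - L0) * 1) with L0 in Hd by ring.
  apply Rabs_def2 in Hd. lra.
Qed.

Lemma expm r z : exp (- r * z) = / exp (r * z).
Proof. rewrite <- exp_Ropp. f_equal. ring. Qed.

Lemma denom_eq Linf L0 r z : Linf * (exp (r * z) - 1) + L0 = exp (r * z) * labor Linf L0 r z.
Proof.
  unfold labor. rewrite expm. field. apply Rgt_not_eq, exp_pos.
Qed.

Lemma calL_cont s r Linf L0 alpha beta z : 0 < labor Linf L0 r z ->
  continuous (calL s r Linf L0 alpha beta) z.
Proof.
  intros Hz. apply (ex_derive_continuous (K:=R_AbsRing) (V:=R_NormedModule)).
  assert (Hd : Linf * (exp (r * z) - 1) + L0 <> 0).
  { rewrite denom_eq. apply Rgt_not_eq. apply Rmult_lt_0_compat; auto. apply exp_pos. }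
  unfold calL, Rpower. unfold labor in *. auto_derive. repeat split; auto.
Qed.

Lemma calL_eq s r Linf L0 alpha beta z : 0 < labor Linf L0 r z ->
  calL s r Linf L0 alpha beta z =
  s * Rpower (labor Linf L0 r z) (alpha + beta - 1) * exp (- (1 - alpha) * (Linf - L0) * exp (- r * z)).
Proof.
  intros Hz. unfold calL. rewrite denom_eq.
  replace (alpha + beta) with ((alpha + beta - 1) + 1) at 1 by ring.
  rewrite Rpower_plus, Rpower_1 by auto.
  rewrite exp_plus.
  replace ((alpha - 1) * (Linf - L0) * exp (- r * z)) with (- (1 - alpha) * (Linf - L0) * exp (- r * z)) by ring.
  field. split; apply Rgt_not_eq; auto. apply exp_pos.
Qed.

Lemma RInt_der s r Linf L0 alpha beta p : 0 < r -> 0 < Linf -> 0 < L0 -> 0 <= p ->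
  is_derive (fun y => RInt (calL s r Linf L0 alpha beta) 0 y) p (calL s r Linf L0 alpha beta p).
Proof.
  intros Hr HL HL0 Hp.
  destruct (lab_pos2 Linf L0 r HL HL0 Hr) as [d [Hd Hl]].
  apply (is_derive_RInt (calL s r Linf L0 alpha beta) (fun y => RInt (calL s r Linf L0 alpha beta) 0 y) 0 p).
  - exists (mkposreal d Hd). intros y Hy. apply (RInt_correct (V:=R_CompleteNormedModule)).
    apply (ex_RInt_continuous (V:=R_CompleteNormedModule)). intros z Hz. apply calL_cont. apply Hl.
    unfold ball in Hy; simpl in Hy; unfold AbsRing_ball, abs, minus, plus, opp in Hy; simpl in Hy.
    apply Rabs_def2 in Hy.
    assert (Rmin 0 y <= z) by apply Hz.
    assert (- d < Rmin 0 y). { apply Rmin_glb_lt; lra. }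
    lra.
  - apply calL_cont. apply Hl. lra.
Qed.

Theorem theorem2 (s r Linf L0 alpha beta k0 : R) (I : R -> Prop) (k : R -> R)
  (hs : 0 < s) (hr : 0 < r) (hLinf : 0 < Linf) (hL0 : 0 < L0)
  (ha : 0 < alpha <= 1) (hb : 0 < beta <= 1)
  (hn : alpha + beta <> 1) (ha1 : alpha <> 1)
  (hI : is_interval I) (hI0 : I 0)
  (hpos : forall t, I t -> 0 < k t)
  (hode : forall t, I t ->
     has_derivative_within I k t
       (s * Rpower (labor Linf L0 r t) (alpha + beta - 1) * Rpower (k t) alpha
        - r * (Linf - L0) * exp (- r * t) * k t))
  (hk0 : k 0 = k0) :
  forall t, I t -> 0 <= t ->
    k t = Rpower
      (exp (- (alpha - 1) * (Linf - L0) * exp (- r * t))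
       * (Rpower k0 (1 - alpha) * exp ((alpha - 1) * (Linf - L0))
          - (alpha - 1) * RInt (calL s r Linf L0 alpha beta) 0 t))
      (1 / (1 - alpha)).
Proof.
  intros t It Ht.
  assert (Ha : 0 < 1 - alpha) by lra.
  set (CL := calL s r Linf L0 alpha beta).
  set (mu := fun y => exp (- (1 - alpha) * (Linf - L0) * exp (- r * y))).
  set (G := fun y => mu y * Rpower (k y) (1 - alpha) - (1 - alpha) * RInt CL 0 y).
  assert (Gcont : forall p, I p -> 0 <= p -> filterlim G (within I (locally p)) (locally (G p))).
  { intros p Ip Hp.
    assert (Hk := cont_within I k p _ (hode p Ip)).
    assert (Hc : filterlim (fun z => Rpower z (1 - alpha)) (locally (k p)) (locally (Rpower (k p) (1 - alpha)))).
    { apply (ex_derive_continuous (K:=R_AbsRing) (V:=R_NormedModule) (fun z => Rpower z (1 - alpha)) (k p)).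
      unfold Rpower. auto_derive. apply hpos; auto. }
    assert (Hu := filterlim_comp _ _ _ k (fun z => Rpower z (1 - alpha)) _ _ _ Hk Hc).
    assert (Hmu : filterlim mu (within I (locally p)) (locally (mu p))).
    { apply (filterlim_filter_le_1 _ (filter_le_within I)).
      apply (ex_derive_continuous (K:=R_AbsRing) (V:=R_NormedModule) mu p).
      unfold mu. auto_derive. auto. }
    assert (HR : filterlim (fun y => RInt CL 0 y) (within I (locally p)) (locally (RInt CL 0 p))).
    { apply (filterlim_filter_le_1 _ (filter_le_within I)).
      apply (ex_derive_continuous (K:=R_AbsRing) (V:=R_NormedModule) (fun y => RInt CL 0 y) p).
      exists (CL p). apply RInt_der; auto. }
    assert (H := lim_plus _ _ _ _ _ (lim_mult _ _ _ _ _ Hmu Hu)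
                   (lim_mult _ _ _ _ _ (filterlim_const (F := within I (locally p)) (- (1 - alpha))) HR)).
    replace (G p) with (mu p * Rpower (k p) (1 - alpha) + - (1 - alpha) * RInt CL 0 p) by (unfold G; ring).
    eapply filterlim_ext; [|exact H]. intros y. simpl. unfold G. ring. }
  assert (KEY : G t = G 0).
  { destruct (Req_dec t 0) as [->|Ht0]; [reflexivity|].
    assert (Htp : 0 < t) by lra.
    assert (Isub : forall y, 0 <= y <= t -> I y) by (intros y Hy; exact (hI 0 t y hI0 It Hy)).
    assert (Gder : forall x, 0 < x < t -> is_derive G x 0).
    { intros x Hx.
      set (Dk := s * Rpower (labor Linf L0 r x) (alpha + beta - 1) * Rpower (k x) alpha
        - r * (Linf - L0) * exp (- r * x) * k x).
      assert (Hkd : is_derive k x Dk).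
      { apply (deriv_interior I k x Dk (Rmin x (t - x))).
        - apply hode. apply Isub. lra.
        - apply Rmin_pos; lra.
        - intros y Hy. apply Isub. apply Rabs_def2 in Hy.
          pose proof (Rmin_l x (t - x)). pose proof (Rmin_r x (t - x)). lra. }
      assert (kx := hpos x (Isub x ltac:(lra))).
      assert (Hpw : is_derive (fun z => Rpower z (1 - alpha)) (k x) (exp ((1 - alpha) * ln (k x)) * ((1 - alpha) / k x))).
      { unfold Rpower. auto_derive. auto. field. lra. }
      assert (Hu := is_derive_comp _ _ x _ _ Hpw Hkd).
      assert (Hmu : is_derive mu x (mu x * ((1 - alpha) * (Linf - L0) * r * exp (- r * x)))).
      { unfold mu. auto_derive. auto. ring. }
      assert (HR := RInt_der s r Linf L0 alpha beta x hr hLinf hL0 ltac:(lra)).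
      assert (H1 := is_derive_mult _ _ _ _ _ Hmu Hu Rmult_comm).
      assert (H2 := is_derive_scal _ _ (1 - alpha) _ HR).
      assert (H3 := is_derive_minus _ _ _ _ _ H1 H2).
      assert (E : forall l1 l2, is_derive G x l1 -> l1 = l2 -> is_derive G x l2) by (intros; subst; auto).
      eapply E; [exact H3|].
      unfold minus, plus, opp, mult, scal; simpl. unfold mult; simpl.
      fold CL. unfold CL. rewrite calL_eq by (apply lab_pos; lra).
      unfold Dk. unfold Rpower.
      set (U := exp ((1 - alpha) * ln (k x))).
      set (K := exp (alpha * ln (k x))).
      assert (UK : U * K = k x).
      { unfold U, K. rewrite <- exp_plus. replace ((1 - alpha) * ln (k x) + alpha * ln (k x)) with (ln (k x)) by ring.
        apply exp_ln; auto. }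
      assert (U0 : 0 < U) by apply exp_pos.
      replace K with (k x / U) by (apply (Rmult_eq_reg_l U); [rewrite UK; field|]; lra).
      unfold mu. field. lra. }
    assert (Gconst : forall x y, 0 < x < t -> 0 < y < t -> G x = G y).
    { intros x y Hx Hy.
      destruct (MVT_gen G x y (fun _ => 0)) as [c [Hc1 Hc2]].
      - intros z Hz. apply Gder.
        assert (0 < Rmin x y) by (apply Rmin_glb_lt; lra).
        assert (Rmax x y < t) by (apply Rmax_lub_lt; lra). lra.
      - intros z Hz. apply continuity_pt_filterlim.
        apply (ex_derive_continuous (K:=R_AbsRing) (V:=R_NormedModule) G z).
        exists 0. apply Gder.
        assert (0 < Rmin x y) by (apply Rmin_glb_lt; lra).
        assert (Rmax x y < t) by (apply Rmax_lub_lt; lra). lra.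
      - lra. }
    assert (E1 : G t = G (t / 2)).
    { apply (endpoint I G t (G (t/2)) (Gcont t It Ht)).
      intros d Hd. assert (0 < Rmin d t) by (apply Rmin_pos; lra).
      pose proof (Rmin_l d t). pose proof (Rmin_r d t).
      exists (t - Rmin d t / 2). split; [apply Isub; lra|]. split.
      - replace (t - Rmin d t / 2 - t) with (- (Rmin d t / 2)) by ring.
        rewrite Rabs_Ropp, Rabs_right; lra.
      - apply Gconst; lra. }
    assert (E2 : G 0 = G (t / 2)).
    { apply (endpoint I G 0 (G (t/2)) (Gcont 0 hI0 ltac:(lra))).
      intros d Hd. assert (0 < Rmin d t) by (apply Rmin_pos; lra).
      pose proof (Rmin_l d t). pose proof (Rmin_r d t).
      exists (Rmin d t / 2). split; [apply Isub; lra|]. split.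
      - replace (Rmin d t / 2 - 0) with (Rmin d t / 2) by ring.
        rewrite Rabs_right; lra.
      - apply Gconst; lra. }
    congruence. }
  unfold G in KEY. rewrite RInt_point in KEY. rewrite hk0 in KEY.
  unfold mu in KEY. replace (- r * 0) with 0 in KEY by ring. rewrite exp_0 in KEY.
  change (@zero R_CompleteNormedModule) with 0 in KEY.
  fold CL.
  assert (Inner : exp (- (alpha - 1) * (Linf - L0) * exp (- r * t)) *
     (Rpower k0 (1 - alpha) * exp ((alpha - 1) * (Linf - L0)) - (alpha - 1) * RInt CL 0 t)
     = Rpower (k t) (1 - alpha)).
  { replace (Rpower k0 (1 - alpha) * exp ((alpha - 1) * (Linf - L0)) - (alpha - 1) * RInt CL 0 t)
      with (exp (- (1 - alpha) * (Linf - L0) * exp (- r * t)) * Rpower (k t) (1 - alpha)).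
    - rewrite <- Rmult_assoc, <- exp_plus.
      replace (- (alpha - 1) * (Linf - L0) * exp (- r * t) + - (1 - alpha) * (Linf - L0) * exp (- r * t)) with 0 by ring.
      rewrite exp_0. ring.
    - replace ((alpha - 1) * (Linf - L0)) with (- (1 - alpha) * (Linf - L0) * 1) by ring.
      rewrite Rmult_comm with (r1 := Rpower k0 (1 - alpha)). lra. }
  rewrite Inner. rewrite Rpower_mult.
  replace ((1 - alpha) * (1 / (1 - alpha))) with 1 by (field; lra).
  rewrite Rpower_1; auto.
Qed.
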